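(* Let $\varphi\colon V \to \left( F(r_L, r_Lr_P) \right)^{r_P}$ be the map sending $L \in V$ to $F_{\alpha_1}(L, r_Lr_P) \oplus \ldots \oplus F_{\alpha_{r_P}}(L, r_Lr_P)$. Then $\varphi$ is a surjective map of algebraic sets, and all fibers of $\varphi$ have the same dimension.
   Context: Let $C$ be a field of characteristic zero with algebraic closure $\bar C$, and $\partial x = x\partial+1$. Fix $P\in C[x,y]$ with $r_P=\deg_y P>1$ such that $P(0,y)$ is squarefree of degree $r_P$, and let $g_1,\ldots,g_{r_P}\in\bar C[[x]]$ be the power series roots of $P(x,y)=0$ at zero, with $\alpha_i = g_i(0)$ (these are distinct). Let $d_L\geq (r_Lr_P - r_L + 1)r_P$, and let $V$ be the set of all $L\in\bar C[x][\partial]$ of order $r_L$ and degree at most $d_L$ whose leading coefficient $\operatorname{lc}_\partial(L)$ does not vanish at $\alpha_1,\ldots,\alpha_{r_P}$. For an operator $L$ of order $r$ whose leading coefficient does not vanish at $\alpha$, and $d_1\geq r$, the fundamental matrix of degree $d_1$ at $\alpha$, $F_\alpha(L,d_1)$, is the $r\times(d_1+1)$ matrix whose first $r$ columns form the identity matrix $I_r$ and each of whose rows consists of the first $d_1+1$ coefficients (in powers of $x-\alpha$) of some power series solution of $L$ at $x=\alpha$. $F(r,d)$ denotes the space of all possible fundamental matrices of degree $d$ for operators of order $r$; it is isomorphic to the affine space $\mathbb{A}^{r(d+1-r)}$. *)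

(* Defs.v *)
From HB Require Import structures.
From mathcomp Require Import all_boot all_order all_algebra.
From mathcomp Require Import mpoly.
From Stdlib Require Import ClassicalEpsilon.
Set Implicit Arguments. Unset Strict Implicit. Unset Printing Implicit Defensive.
Import Order.TTheory GRing.Theory.
Local Open Scope ring_scope.

(* P(0,y) for P in C[x][y], encoded as {poly {poly C}} : coefficients in y
   are polynomials in x. *)
Definition P_at0 (C : fieldType) (P : {poly {poly C}}) : {poly C} :=
  map_poly (fun c : {poly C} => c.[0]) P.

Definition squarefree (C : fieldType) (p : {poly C}) : Prop :=
  forall q : {poly C}, q * q %| p -> (size q <= 1)%N.

Section Ops.
Variable K : fieldType.

(* An operator L = \sum_{j <= r} c_j(x) d^j in K[x][d] (with d x = x d + 1)
   of order (at most) r and degree at most d in x is encoded by its matrix of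
   coefficients A : 'M_(r.+1, d.+1), A j i = coefficient of x^i in c_j. *)
Definition opcoef r d (A : 'M[K]_(r.+1, d.+1)) (j : 'I_r.+1) : {poly K} :=
  \poly_(i < d.+1) A j (inord i).

Definition oplc r d (A : 'M[K]_(r.+1, d.+1)) : {poly K} := opcoef A ord_max.

(* Formal power series at x = alpha: f = \sum_k f k (x - alpha)^k.
   Coefficient of (x-alpha)^k in L f, where d acts as d/dx. *)
Definition ser_apply r d (A : 'M[K]_(r.+1, d.+1)) (alpha : K) (f : nat -> K)
    (k : nat) : K :=
  \sum_(j < r.+1) \sum_(i < k.+1)
     ((opcoef A j) \Po ('X + alpha%:P))`_i
       * ((k - i + j) ^_ j)%:R * f (k - i + j)%N.

Definition is_ps_solution r d (A : 'M[K]_(r.+1, d.+1)) (alpha : K)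
    (f : nat -> K) : Prop :=
  forall k, ser_apply A alpha f k = 0.

Definition is_fund_mat r d (A : 'M[K]_(r.+1, d.+1)) (alpha : K) (d1 : nat)
    (M : 'M[K]_(r, d1.+1)) : Prop :=
  (forall (i : 'I_r) (j : 'I_d1.+1), (j < r)%N -> M i j = (i == j :> nat)%:R)
  /\ (forall i : 'I_r, exists f : nat -> K,
        is_ps_solution A alpha f /\ forall j : 'I_d1.+1, M i j = f j).

Definition fund_mat r d (A : 'M[K]_(r.+1, d.+1)) (alpha : K) (d1 : nat)
  : 'M[K]_(r, d1.+1) :=
  epsilon (inhabits 0) (@is_fund_mat r d A alpha d1).

Definition Fspace r d1 (M : 'M[K]_(r, d1.+1)) : Prop :=
  forall (i : 'I_r) (j : 'I_d1.+1), (j < r)%N -> M i j = (i == j :> nat)%:R.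

Definition coords r d (A : 'M[K]_(r.+1, d.+1)) : 'I_(r.+1 * d.+1) -> K :=
  fun k => mxvec A 0 k.

(* Dimension of a subset S of affine n-space K^n (dimension of its Zariski
   closure = transcendence degree of its coordinate ring): the maximal number
   of coordinate functions that are algebraically independent on S. *)
Definition coord_indep n (S : ('I_n -> K) -> Prop) e (s : 'I_e -> 'I_n) :=
  forall p : {mpoly K[e]},
    (forall v, S v -> p.@[fun j => v (s j)] = 0) -> p = 0.

Definition has_dim n (S : ('I_n -> K) -> Prop) (dim : nat) : Prop :=
  (exists s : 'I_dim -> 'I_n, injective s /\ coord_indep S s)
  /\ (forall e (s : 'I_e -> 'I_n), injective s -> coord_indep S s ->
        (e <= dim)%N).
End Ops.

(* Main.v *)
Require Import Defs.
From HB Require Import structures.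
From mathcomp Require Import all_boot all_order all_algebra.
From mathcomp Require Import mpoly.
From mathcomp Require Import zify ring.
From Stdlib Require Import ClassicalEpsilon FunctionalExtensionality.
Import GRing.Theory.
Local Open Scope ring_scope.

Set Implicit Arguments. Unset Strict Implicit. Unset Printing Implicit Defensive.

Section OpTheory.
Variable K : fieldType.
Hypothesis K0 : forall n : nat, (n%:R == 0 :> K) = (n == 0%N).
Variables r d : nat.
Implicit Types A B : 'M[K]_(r.+1, d.+1).

Definition Tc A (al : K) (j : 'I_r.+1) (i : nat) : K :=
  ((opcoef A j) \Po ('X + al%:P))`_i.

Definition serT (tau : 'I_r.+1 -> nat -> K) (f : nat -> K) (k : nat) : K :=
  \sum_(j < r.+1) \sum_(i < k.+1)
     tau j i * ((k - i + j) ^_ j)%:R * f (k - i + j)%N.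

Lemma ser_applyE A al f k : ser_apply A al f k = serT (Tc A al) f k.
Proof. by []. Qed.

Lemma serT_fg tau f g k : (forall m, (m < k + r)%N -> f m = g m) ->
  serT tau f k = serT tau g k
     + tau ord_max 0%N * ((k + r) ^_ r)%:R * (f (k + r)%N - g (k + r)%N).
Proof.
move=> fg.
have -> : serT tau f k = serT tau g k + (serT tau f k - serT tau g k).
  by rewrite addrC subrK.
congr (_ + _); rewrite /serT -sumrB big_ord_recr /= big1 => [|j _]; last first.
  rewrite -sumrB big1 // => i _; rewrite fg ?subrr //.
  have := ltn_ord j; have := ltn_ord i; lia.
rewrite add0r -sumrB big_ord_recl /= big1 => [|i _].
  by rewrite addr0 subn0 -mulrBr.
rewrite fg ?subrr //; have := ltn_ord i; rewrite /bump /=; lia.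
Qed.

Definition lcv A al := (oplc A).[al].

Lemma Tc_r0 A al : Tc A al ord_max 0 = lcv A al.
Proof. by rewrite /Tc -horner_coef0 horner_comp !hornerE. Qed.

Lemma ffact_neq0 n m : (m <= n)%N -> ((n ^_ m)%:R : K) != 0.
Proof. by move=> h; rewrite K0 -lt0n ffact_gt0. Qed.
Arguments ffact_neq0 {n m}.

Fixpoint Fsol A al (init : nat -> K) n : nat -> K :=
  match n with
  | 0 => fun m => if (m < r)%N then init m else 0
  | n'.+1 => let F := Fsol A al init n' in
      fun m => if m == (n' + r)%N then
                 F m - ser_apply A al F n' / (lcv A al * ((n' + r) ^_ r)%:R)
               else F m
  end.
Definition sol A al init m := Fsol A al init m.+1 m.

Lemma Fsol_stable A al init n n' m : (n <= n')%N -> (m < n + r)%N ->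
  Fsol A al init n' m = Fsol A al init n m.
Proof.
move=> /subnK <- hm; elim: (n' - n)%N => //= k IH.
rewrite ifN ?IH //; apply/negP => /eqP; lia.
Qed.

Lemma Fsol_step A al init n : lcv A al != 0 ->
  ser_apply A al (Fsol A al init n.+1) n = 0.
Proof.
move=> lc0; rewrite ser_applyE (@serT_fg _ _ (Fsol A al init n)).
  rewrite /= eqxx Tc_r0 -ser_applyE.
  set S := ser_apply _ _ _ _.
  have c0 := ffact_neq0 (leq_addl n r).
  rewrite addrAC subrr add0r mulrN mulrA [_ * S]mulrC -mulrA divff ?mulr1 ?subrr //.
  by rewrite mulf_neq0.
by move=> m hm /=; rewrite ifN //; apply/negP => /eqP; lia.
Qed.

Lemma sol_eq A al init k m : (m <= k + r)%N ->
  sol A al init m = Fsol A al init k.+1 m.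
Proof.
move=> hm; rewrite /sol; case: (leqP m k) => hmk.
  by rewrite (@Fsol_stable _ _ _ m.+1 k.+1) //; lia.
by rewrite (@Fsol_stable _ _ _ k.+1 m.+1) //; lia.
Qed.

Lemma sol_ok A al init : lcv A al != 0 -> is_ps_solution A al (sol A al init).
Proof.
move=> lc0 k; rewrite ser_applyE (@serT_fg _ _ (Fsol A al init k.+1)).
  by rewrite (@sol_eq _ _ _ k) // subrr mulr0 addr0 -ser_applyE Fsol_step.
by move=> m hm; rewrite (@sol_eq _ _ _ k) //; lia.
Qed.

Lemma sol_init A al init m : (m < r)%N -> sol A al init m = init m.
Proof. by move=> hm; rewrite /sol (@Fsol_stable _ _ _ 0) //= hm. Qed.

Lemma sol_uniq A al f g N : lcv A al != 0 ->
  (forall k, (k < N)%N -> ser_apply A al f k = 0) ->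
  (forall k, (k < N)%N -> ser_apply A al g k = 0) ->
  (forall m, (m < r)%N -> f m = g m) ->
  forall m, (m < N + r)%N -> f m = g m.
Proof.
move=> lc0 hf hg h0.
suff H : forall n, (n <= N)%N -> forall m, (m < n + r)%N -> f m = g m.
  by apply: H.
elim=> [|n IH] hn m hm; first exact: h0.
case: (ltnP m (n + r)) => hm2; first by apply: IH => //; lia.
have -> : m = (n + r)%N by lia.
have := hf n hn; rewrite ser_applyE (@serT_fg _ _ g); last first.
  by move=> m' hm'; apply: IH => //; lia.
rewrite -ser_applyE hg // add0r Tc_r0 => /eqP.
rewrite mulf_eq0 mulf_eq0 (negbTE lc0) (negbTE (ffact_neq0 (leq_addl n r))) /=.
by rewrite subr_eq0 => /eqP.
Qed.

Lemma fund_exists A al d1 : lcv A al != 0 -> exists M : 'M_(r, d1.+1), is_fund_mat A al M.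
Proof.
move=> lc0.
exists (\matrix_(a < r, b < d1.+1) sol A al (fun m => (a == m :> nat)%:R) b).
split=> [i j hj|i]; first by rewrite mxE sol_init.
exists (sol A al (fun m => (i == m :> nat)%:R)); split; first exact: sol_ok.
by move=> j; rewrite mxE.
Qed.

Lemma fund_matP A al d1 : lcv A al != 0 ->
  is_fund_mat A al (fund_mat A al d1).
Proof. by move=> lc0; apply: epsilon_spec; apply: fund_exists. Qed.

Lemma fund_mat_sol A al d1 (a : 'I_r) (b : 'I_d1.+1) :
  lcv A al != 0 -> (r <= d1.+1)%N ->
  fund_mat A al d1 a b = sol A al (fun m => (a == m :> nat)%:R) b.
Proof.
move=> lc0 rd; have [Hid Hrow] := @fund_matP A al d1 lc0.
have [f [fs fM]] := Hrow a; rewrite fM.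
apply: (@sol_uniq _ _ _ _ b.+1 lc0).
- by move=> k _; apply: fs.
- by move=> k _; apply: sol_ok.
- move=> m hm; rewrite sol_init //.
  have hm' : (m < d1.+1)%N by lia.
  by rewrite -(fM (Ordinal hm')) Hid.
- lia.
Qed.

End OpTheory.

Section Reg.
Variable K : fieldType.
Variables r d : nat.
Local Notation n := (r.+1 * d.+1)%N.
Local Notation MT := 'M[K]_(r.+1, d.+1).

Definition ispol (h : MT -> K) :=
  exists p : {mpoly K[n]}, forall A, h A = p.@[coords A].

Lemma ispol_cst c : ispol (fun _ => c).
Proof. by exists c%:MP => A; rewrite mevalC. Qed.

Lemma ispolD h1 h2 : ispol h1 -> ispol h2 -> ispol (fun A => h1 A + h2 A).
Proof. by move=> [p1 e1] [p2 e2]; exists (p1 + p2) => A; rewrite mevalD e1 e2. Qed.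

Lemma ispolM h1 h2 : ispol h1 -> ispol h2 -> ispol (fun A => h1 A * h2 A).
Proof. by move=> [p1 e1] [p2 e2]; exists (p1 * p2) => A; rewrite mevalM e1 e2. Qed.

Lemma ispol_sum (I : Type) (s : seq I) (P : pred I) (F : I -> MT -> K) :
  (forall i, ispol (F i)) -> ispol (fun A => \sum_(i <- s | P i) F i A).
Proof.
move=> hF; elim: s => [|x s IH].
  have -> : (fun A => \sum_(i <- [::] | P i) F i A) = (fun _ => 0).
    by apply: functional_extensionality => A; rewrite big_nil.
  exact: ispol_cst.
have -> : (fun A => \sum_(i <- x :: s | P i) F i A) =
   (fun A => (if P x then F x A else 0) + \sum_(i <- s | P i) F i A).
  by apply: functional_extensionality => A; rewrite big_cons; case: (P x); rewrite ?add0r.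
apply: ispolD => //; case: (P x) => //; exact: ispol_cst.
Qed.

Lemma ispol_entry j m : ispol (fun A : MT => A j m).
Proof. by exists 'X_(mxvec_index j m) => A; rewrite mevalXU /coords mxvecE. Qed.

Lemma TcE (A : MT) al j i :
  Tc A al j i = \sum_(m < d.+1) A j m * (('X + al%:P) ^+ m)`_i.
Proof.
rewrite /Tc /opcoef poly_def.
rewrite (big_morph (fun p => p \Po ('X + al%:P)) (fun p q => comp_polyD p q _)
           (comp_poly0 _)).
rewrite coef_sum; apply: eq_bigr => m _.
by rewrite comp_polyZ comp_Xn_poly coefZ inord_val.
Qed.

Lemma ispol_Tc al j i : ispol (fun A => Tc A al j i).
Proof.
have -> : (fun A : MT => Tc A al j i) =
   (fun A => \sum_(m < d.+1) A j m * (('X + al%:P) ^+ m)`_i).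
  by apply: functional_extensionality => A; rewrite TcE.
by apply: ispol_sum => m; apply: ispolM; [apply: ispol_entry|apply: ispol_cst].
Qed.

Lemma ispol_lcv al : ispol (fun A => lcv A al).
Proof.
have -> : (fun A : MT => lcv A al) = (fun A => Tc A al ord_max 0).
  by apply: functional_extensionality => A; rewrite Tc_r0.
exact: ispol_Tc.
Qed.

Variable Q : MT -> Prop.

Definition pish (h : MT -> K) := exists p q : {mpoly K[n]}, forall A, Q A ->
  q.@[coords A] != 0 /\ h A = p.@[coords A] / q.@[coords A].

Lemma ispol_pish h : ispol h -> pish h.
Proof.
move=> [p e]; exists p, 1 => A _; rewrite meval1 oner_neq0 divr1; split=> //.
Qed.

Lemma pish_cst c : pish (fun _ => c).
Proof. by apply: ispol_pish; apply: ispol_cst. Qed.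

Lemma pishD h1 h2 : pish h1 -> pish h2 -> pish (fun A => h1 A + h2 A).
Proof.
move=> [p1 [q1 e1]] [p2 [q2 e2]]; exists (p1 * q2 + p2 * q1), (q1 * q2) => A QA.
have [n1 E1] := e1 A QA; have [n2 E2] := e2 A QA.
rewrite !mevalM mevalD !mevalM mulf_neq0 //; split=> //.
by rewrite E1 E2; field; rewrite n1 n2.
Qed.

Lemma pishM h1 h2 : pish h1 -> pish h2 -> pish (fun A => h1 A * h2 A).
Proof.
move=> [p1 [q1 e1]] [p2 [q2 e2]]; exists (p1 * p2), (q1 * q2) => A QA.
have [n1 E1] := e1 A QA; have [n2 E2] := e2 A QA.
rewrite !mevalM mulf_neq0 //; split=> //.
by rewrite E1 E2; field; rewrite n1 n2.
Qed.

Lemma pishN h : pish h -> pish (fun A => - h A).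
Proof.
move=> [p [q e]]; exists (- p), q => A QA; have [n1 E1] := e A QA.
by rewrite mevalN E1 mulNr.
Qed.

Lemma pish_inv h : ispol h -> (forall A, Q A -> h A != 0) -> pish (fun A => (h A)^-1).
Proof.
move=> [p e] hnz; exists 1, p => A QA; rewrite meval1 -e div1r; split=> //.
exact: hnz.
Qed.

Lemma pish_sum (I : Type) (s : seq I) (P : pred I) (F : I -> MT -> K) :
  (forall i, pish (F i)) -> pish (fun A => \sum_(i <- s | P i) F i A).
Proof.
move=> hF; elim: s => [|x s IH].
  have -> : (fun A => \sum_(i <- [::] | P i) F i A) = (fun _ => 0).
    by apply: functional_extensionality => A; rewrite big_nil.
  exact: pish_cst.
have -> : (fun A => \sum_(i <- x :: s | P i) F i A) =
   (fun A => (if P x then F x A else 0) + \sum_(i <- s | P i) F i A).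
  by apply: functional_extensionality => A; rewrite big_cons; case: (P x); rewrite ?add0r.
apply: pishD => //; case: (P x) => //; exact: pish_cst.
Qed.

Variable al : K.
Hypothesis Qlc : forall A, Q A -> lcv A al != 0.
Hypothesis K0 : forall n : nat, (n%:R == 0 :> K) = (n == 0%N).

Lemma pish_Fsol init k m : pish (fun A => Fsol A al init k m).
Proof.
elim: k m => [|k IH] m /=; first exact: pish_cst.
case: eqP => _; last exact: IH.
apply: pishD; first exact: IH.
apply: pishN; apply: pishM.
  rewrite /ser_apply; apply: pish_sum => j; apply: pish_sum => i.
  apply: pishM; last exact: IH.
  by apply: pishM; [apply: ispol_pish; apply: ispol_Tc|apply: pish_cst].
apply: pish_inv.
  by apply: ispolM; [apply: ispol_lcv|apply: ispol_cst].
move=> A QA; apply: mulf_neq0; first exact: Qlc.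
by rewrite K0 -lt0n ffact_gt0 leq_addl.
Qed.

End Reg.

Section Hermite.
Variable K : fieldType.

Lemma taylor0_dvd (p : {poly K}) (a : K) N :
  (forall k, (k < N)%N -> (p \Po ('X + a%:P))`_k = 0) -> ('X - a%:P) ^+ N %| p.
Proof.
move=> h; set q := p \Po ('X + a%:P).
have hq : q = drop_poly N q * 'X^N.
  rewrite -{1}(poly_take_drop N q).
  have -> : take_poly N q = 0.
    apply/polyP => i; rewrite coef_take_poly coef0; case: ifP => // /h.
    by rewrite /q.
  by rewrite add0r.
rewrite -(comp_polyXaddC_K p a) -/q hq comp_polyM comp_Xn_poly.
exact: dvdp_mull (dvdpp _).
Qed.

Lemma prod_dvd (s : seq K) N (p : {poly K}) : uniq s ->
  (forall a, a \in s -> ('X - a%:P) ^+ N %| p) ->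
  \prod_(a <- s) ('X - a%:P) ^+ N %| p.
Proof.
elim: s p => [|a s IH] p /=; first by rewrite big_nil dvd1p.
move=> /andP[ns us] h; rewrite big_cons Gauss_dvdp.
  rewrite h ?mem_head //=; apply: IH => // b hb; apply: h.
  by rewrite in_cons hb orbT.
apply: coprimep_expl; rewrite coprimep_sym coprimep_XsubC /root horner_prod.
rewrite prodf_seq_neq0; apply/allP => b hb /=.
rewrite horner_exp !hornerE expf_neq0 // subr_eq0; apply/eqP => eab.
by move: ns; rewrite eab hb.
Qed.

Lemma size_prod_exp (s : seq K) N :
  size (\prod_(a <- s) ('X - a%:P) ^+ N) = (N * size s).+1.
Proof.
elim: s => [|a s IH]; first by rewrite big_nil size_poly1 muln0.
have mon : forall s' : seq K, \prod_(b <- s') ('X - b%:P) ^+ N \is monic.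
  move=> s'; apply: (@monic_prod _ _ s' xpredT (fun b : K => ('X - b%:P) ^+ N)).
  by move=> b _; apply: monic_exp; apply: monicXsubC.
rewrite big_cons size_monicM ?monic_exp ?monicXsubC ?monic_neq0 //.
by rewrite size_exp_XsubC IH /=; lia.
Qed.

Lemma herm_inj (s : seq K) N (p : {poly K}) : uniq s -> (size p <= N * size s)%N ->
  (forall a, a \in s -> forall k, (k < N)%N -> (p \Po ('X + a%:P))`_k = 0) ->
  p = 0.
Proof.
move=> us sp h; apply/eqP; apply: contraTT sp => pn0.
have := dvdp_leq pn0 (prod_dvd us (fun a ha => taylor0_dvd (h a ha))).
by rewrite size_prod_exp -ltnNge.
Qed.

Definition taylor_row n (v : 'rV[K]_n) : {poly K} := \sum_(j < n) v 0 j *: 'X^j.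

Lemma coef_taylor_row n (v : 'rV[K]_n) (j : 'I_n) : (taylor_row v)`_j = v 0 j.
Proof.
rewrite /taylor_row coef_sum (bigD1 j) //= coefZ coefXn eqxx mulr1 big1 ?addr0 //.
by move=> i ij; rewrite coefZ coefXn; case: eqP => [h|]; rewrite ?mulr0 //; case/negP: ij; apply/eqP/val_inj; rewrite /= h.
Qed.

Lemma size_taylor_row n (v : 'rV[K]_n) : (size (taylor_row v) <= n)%N.
Proof.
apply/leq_sizeP => j hj; rewrite /taylor_row coef_sum big1 // => i _.
by rewrite coefZ coefXn; case: eqP => [ji|]; rewrite ?mulr0 //; have := ltn_ord i; lia.
Qed.

Lemma coef_comp_sum n (v : 'rV[K]_n) (q : {poly K}) k :
  (taylor_row v \Po q)`_k = \sum_(j < n) v 0 j * (q ^+ j)`_k.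
Proof.
rewrite /taylor_row.
rewrite (big_morph (fun p => p \Po q) (fun p1 p2 => comp_polyD p1 p2 _) (comp_poly0 _)).
by rewrite coef_sum; apply: eq_bigr => j _; rewrite comp_polyZ comp_Xn_poly coefZ.
Qed.

Lemma herm_surj m N (alpha : 'I_m -> K) (w : 'I_m -> nat -> K) :
  injective alpha -> (0 < N)%N ->
  exists p : {poly K}, (size p <= N * m)%N /\
    forall i k, (k < N)%N -> (p \Po ('X + (alpha i)%:P))`_k = w i k.
Proof.
move=> ainj N0; set n := (N * m)%N.
pose al (x : nat) : K := if insub x is Some i then alpha i else 0.
pose w' (x k : nat) : K := if insub x is Some i then w i k else 0.
have alE (i : 'I_m) : al i = alpha i by rewrite /al valK.
have w'E (i : 'I_m) k : w' i k = w i k by rewrite /w' valK.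
pose Bm : 'M[K]_n := \matrix_(j, o) ((('X + (al (o %/ N)%N)%:P) ^+ j)`_(o %% N)).
have BmE (v : 'rV_n) (o : 'I_n) :
    (v *m Bm) 0 o = (taylor_row v \Po ('X + (al (o %/ N)%N)%:P))`_(o %% N).
  by rewrite coef_comp_sum mxE; apply: eq_bigr => j _; rewrite mxE.
have ordP (i : 'I_m) k : (k < N)%N -> (i * N + k < n)%N.
  move=> hk; have := ltn_ord i; rewrite /n => hi.
  have : (i.+1 * N <= m * N)%N by rewrite leq_mul2r hi orbT.
  rewrite mulSn; lia.
have divE (i : 'I_m) k : (k < N)%N -> ((i * N + k) %/ N)%N = i.
  by move=> hk; rewrite divnMDl // divn_small ?addn0.
have modE (i : 'I_m) k : (k < N)%N -> ((i * N + k) %% N)%N = k.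
  by move=> hk; rewrite modnMDl modn_small.
have Bunit : Bm \in unitmx.
  rewrite -row_free_unit; apply: inj_row_free => v hv.
  have p0 : taylor_row v = 0.
    apply: (@herm_inj [seq alpha i | i <- enum 'I_m] N).
    - by rewrite map_inj_uniq ?enum_uniq.
    - by rewrite size_map size_enum_ord size_taylor_row.
    move=> a /mapP[i _ ->] k hk.
    have := BmE v (Ordinal (ordP i k hk)); rewrite hv mxE /= divE // modE //.
    by rewrite alE => <-.
  by apply/rowP => j; rewrite mxE -coef_taylor_row p0 coef0.
pose wv : 'rV_n := \row_o w' (o %/ N)%N (o %% N)%N.
exists (taylor_row (wv *m invmx Bm)); split; first exact: size_taylor_row.
move=> i k hk; have := BmE (wv *m invmx Bm) (Ordinal (ordP i k hk)).
by rewrite mulmxKV // mxE /= divE // modE // alE w'E => <-.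
Qed.

End Hermite.

Section Jets.
Variable K : fieldType.
Hypothesis K0 : forall n : nat, (n%:R == 0 :> K) = (n == 0%N).
Variable r : nat.
Variable gg : 'I_r.+1 -> nat -> K.
Hypothesis ggE : forall a : 'I_r.+1, (a < r)%N -> forall m, (m < r)%N ->
  gg a m = (a == m :> nat)%:R.

Lemma fact_neq0 n : ((n`!)%:R : K) != 0.
Proof. by rewrite K0 -lt0n fact_gt0. Qed.

Lemma serT_tt (tau tau' : 'I_r.+1 -> nat -> K) (a : 'I_r.+1) k :
  (a < r)%N ->
  (forall j i, (i < k)%N -> tau j i = tau' j i) ->
  tau ord_max k = tau' ord_max k ->
  serT tau (gg a) k = serT tau' (gg a) k + (tau a k - tau' a k) * (a`!)%:R.
Proof.
move=> ar h hm.
have -> : serT tau (gg a) k = serT tau' (gg a) k + (serT tau (gg a) k - serT tau' (gg a) k).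
  by rewrite addrC subrK.
congr (_ + _); rewrite /serT -sumrB (bigD1 a) //= [X in _ + X]big1 => [|j ja].
  rewrite addr0 -sumrB big_ord_recr /= big1 => [|i _]; last first.
    by rewrite h ?subrr // mulrBl mulrBl subrr.
  rewrite add0r subnn add0n ffactnn ggE // eqxx !mulr1.
  by rewrite -mulrBl.
rewrite -sumrB big_ord_recr /= big1 => [|i _]; last first.
  by rewrite h ?subrr // mulrBl mulrBl subrr.
rewrite add0r subnn add0n -mulrBl -mulrBl.
case: (ltnP j r) => jr.
  rewrite ggE //; case: eqP => [aj|]; last by rewrite mulr0.
  by move: ja; rewrite -(inj_eq val_inj) /= aj eqxx.
have -> : j = ord_max by apply/val_inj => /=; have := ltn_ord j; lia.
by rewrite hm subrr !mul0r.
Qed.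

Variable tau0 : 'I_r.+1 -> nat -> K.

Fixpoint Tsol n : 'I_r.+1 -> nat -> K :=
  match n with
  | 0 => tau0
  | n'.+1 => let t := Tsol n' in
      fun j i => if (j < r)%N && (i == n') then
                   t j i - serT t (gg j) n' / (j`!)%:R
                 else t j i
  end.

Definition jsol j i := Tsol i.+1 j i.

Lemma Tsol_stable n n' j i : (n <= n')%N -> (i < n)%N -> Tsol n' j i = Tsol n j i.
Proof.
move=> /subnK <- hi; elim: (n' - n)%N => //= k IH.
rewrite IH; case: ifP => // /andP[_ /eqP]; lia.
Qed.

Lemma Tsol_max n i : Tsol n ord_max i = tau0 ord_max i.
Proof. by elim: n => //= n ->; rewrite ltnn. Qed.

Lemma jsol_max i : jsol ord_max i = tau0 ord_max i.
Proof. exact: Tsol_max. Qed.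

Lemma Tsol_step (a : 'I_r.+1) k : (a < r)%N -> serT (Tsol k.+1) (gg a) k = 0.
Proof.
move=> ar; rewrite (@serT_tt _ (Tsol k)) //.
- rewrite /= ar eqxx /=; set S := serT _ _ _.
  rewrite addrAC subrr add0r mulNr -mulrA mulVf ?mulr1 ?subrr //.
  exact: fact_neq0.
- by move=> j i hi /=; rewrite ifN //; apply/negP => /andP[_ /eqP]; lia.
- by rewrite !Tsol_max.
Qed.

Lemma jsol_eq k j i : (i <= k)%N -> jsol j i = Tsol k.+1 j i.
Proof. by move=> hi; rewrite /jsol (@Tsol_stable i.+1 k.+1). Qed.

Lemma jsol_ok (a : 'I_r.+1) k : (a < r)%N -> serT jsol (gg a) k = 0.
Proof.
move=> ar; rewrite (@serT_tt _ (Tsol k.+1)) //.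
- by rewrite (@jsol_eq k) // subrr mul0r addr0 Tsol_step.
- by move=> j i hi; rewrite (@jsol_eq k) // ltnW.
Qed.

End Jets.

Section JetsUniq.
Variable K : fieldType.
Hypothesis K0 : forall n : nat, (n%:R == 0 :> K) = (n == 0%N).
Variable r : nat.
Variable gg : 'I_r.+1 -> nat -> K.
Hypothesis ggE : forall a : 'I_r.+1, (a < r)%N -> forall m, (m < r)%N ->
  gg a m = (a == m :> nat)%:R.

Lemma jets_uniq (tau tau' : 'I_r.+1 -> nat -> K) N :
  (forall a : 'I_r.+1, (a < r)%N -> forall k, (k < N)%N -> serT tau (gg a) k = 0) ->
  (forall a : 'I_r.+1, (a < r)%N -> forall k, (k < N)%N -> serT tau' (gg a) k = 0) ->
  (forall i, (i < N)%N -> tau ord_max i = tau' ord_max i) ->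
  forall j i, (i < N)%N -> tau j i = tau' j i.
Proof.
move=> h h' hm.
suff H : forall n, (n <= N)%N -> forall j i, (i < n)%N -> tau j i = tau' j i.
  by move=> j i hi; apply: (H N).
elim=> [|n IH] hn j i hi //.
case: (ltnP i n) => hin; first by apply: IH => //; lia.
have -> : i = n by lia.
case: (ltnP j r) => jr; last first.
  have -> : j = ord_max by apply/val_inj => /=; have := ltn_ord j; lia.
  by apply: hm.
have := h j jr n hn; rewrite (@serT_tt K r gg ggE tau tau' j n jr); last first.
  by apply: hm.
  by move=> j' i' hi'; apply: IH => //; lia.
rewrite h' // add0r => /eqP; rewrite mulf_eq0 (negbTE (fact_neq0 K0 _)) orbF.
by rewrite subr_eq0 => /eqP.
Qed.

End JetsUniq.

Lemma digits_inj B n (a b : 'I_n -> nat) :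
  (forall i, a i < B)%N -> (forall i, b i < B)%N ->
  (\sum_(i < n) a i * B ^ i = \sum_(i < n) b i * B ^ i)%N -> a =1 b.
Proof.
elim: n a b => [|n IH] a b ha hb e i; first by case: i.
move: e; rewrite !big_ord_recl /= !expn0 !muln1.
have sh (c : 'I_n.+1 -> nat) : (\sum_(i < n) c (lift ord0 i) * B ^ (bump 0 i))%N =
   (B * \sum_(i < n) c (lift ord0 i) * B ^ i)%N.
  rewrite big_distrr /=; apply: eq_bigr => j _; rewrite /bump /= add1n expnS; lia.
rewrite !sh => e.
have e0 : a ord0 = b ord0.
  have := congr1 (fun x => x %% B)%N e; rewrite /= ![(B * _)%N]mulnC.
  by rewrite ![(_ + _ * B)%N]addnC !modnMDl !modn_small.
have B0 : (0 < B)%N by have := ha ord0; lia.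
have e1 : (\sum_(i < n) a (lift ord0 i) * B ^ i = \sum_(i < n) b (lift ord0 i) * B ^ i)%N.
  have := congr1 (fun x => x %/ B)%N e; rewrite /= ![(B * _)%N]mulnC.
  rewrite ![(_ + _ * B)%N]addnC !divnMDl // !divn_small //; lia.
have := IH _ _ (fun i => ha (lift ord0 i)) (fun i => hb (lift ord0 i)) e1.
case: (unliftP ord0 i) => [j ->|->] // h; exact: h.
Qed.

Section Vanish.
Variable K : fieldType.
Hypothesis K0 : forall n : nat, (n%:R == 0 :> K) = (n == 0%N).

Lemma natr_inj : injective (fun n : nat => (n%:R : K)).
Proof.
move=> i j /= e; apply/eqP; rewrite eqn_leq; apply/andP; split.
  case: (leqP i j) => // h; have := K0 (i - j); rewrite natrB ?e ?subrr ?eqxx; lia.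
case: (leqP j i) => // h; have := K0 (j - i); rewrite natrB ?e ?subrr ?eqxx; lia.
Qed.

Lemma poly_vanish (g : {poly K}) : (forall x, g.[x] = 0) -> g = 0.
Proof.
move=> h; apply/eqP; apply: contraT => gn0.
have := max_poly_roots gn0 (rs := [seq i%:R | i <- iota 0 (size g)]).
rewrite size_map size_iota ltnn; apply.
  by apply/allP => x _; apply/eqP; apply: h.
by rewrite map_inj_uniq ?iota_uniq //; apply: natr_inj.
Qed.

Lemma mpoly_vanish n (p : {mpoly K[n]}) : (forall v : 'I_n -> K, p.@[v] = 0) -> p = 0.
Proof.
move=> h; set B := msize p.
pose ka (m : 'X_{1..n}) := (\sum_(i < n) m i * B ^ i)%N.
pose g : {poly K} := \sum_(m <- msupp p) p@_m *: 'X^(ka m).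
have g0 : g = 0.
  apply: poly_vanish => x; rewrite -(h (fun i => x ^+ (B ^ i))) mevalE.
  rewrite horner_sum; apply: eq_bigr => m _; rewrite hornerZ hornerXn; congr (_ * _).
  rewrite /ka -prodrXr; apply: eq_bigr => i _; rewrite -exprM; congr (_ ^+ _); lia.
have kainj : {in msupp p &, injective ka}.
  move=> m1 m2 h1 h2 e; apply/mnmP; apply: (digits_inj (B := B)) e.
    move=> i; apply: leq_ltn_trans (msize_mdeg_lt h1); rewrite mdegE.
    by rewrite (bigD1 i) //= leq_addr.
  move=> i; apply: leq_ltn_trans (msize_mdeg_lt h2); rewrite mdegE.
  by rewrite (bigD1 i) //= leq_addr.
apply/eqP; rewrite -msupp_eq0; apply/eqP.
case E: (msupp p) => [|m0 s] //.
have hm0 : m0 \in msupp p by rewrite E mem_head.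
have := congr1 (fun q : {poly K} => q`_(ka m0)) g0.
rewrite /= coef0 /g coef_sum (bigD1_seq m0) ?msupp_uniq //= coefZ coefXn eqxx mulr1.
rewrite big1_seq ?addr0 => [|m /andP[mm0 hm]]; last first.
  rewrite coefZ coefXn; case: eqP => [e|]; last by rewrite mulr0.
  by move: mm0; rewrite (kainj _ _ hm0 hm e) eqxx.
by move=> e; move: hm0; rewrite mcoeff_msupp e eqxx.
Qed.

End Vanish.

Section Main.
Variable K : fieldType.
Hypothesis K0 : forall n : nat, (n%:R == 0 :> K) = (n == 0%N).
Variables rL rP dL : nat.
Variable alpha : 'I_rP -> K.
Hypothesis ainj : injective alpha.
Hypothesis rP1 : (1 < rP)%N.
Local Notation r := rL.
Local Notation d := dL.
Local Notation d1 := (rL * rP)%N.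
Local Notation N := (rL * rP - rL + 1)%N.
Hypothesis hdL : (N * rP <= dL)%N.
Local Notation MT := 'M[K]_(r.+1, d.+1).

Lemma r_le_d1 : (r <= d1)%N.
Proof. by rewrite leq_pmulr //; lia. Qed.

Lemma NrE : (N + r = d1.+1)%N.
Proof. have := r_le_d1; lia. Qed.

Lemma N0 : (0 < N)%N.
Proof. lia. Qed.

Lemma ser_ext (A : MT) al f g k : (forall m, (m <= k + r)%N -> f m = g m) ->
  ser_apply A al f k = ser_apply A al g k.
Proof.
move=> h; rewrite !ser_applyE (@serT_fg _ _ _ _ g); last by move=> m hm; apply: h; lia.
by rewrite h // subrr mulr0 addr0.
Qed.

Lemma TcD (A B : MT) al j i : Tc (A + B) al j i = Tc A al j i + Tc B al j i.
Proof. by rewrite !TcE -big_split; apply: eq_bigr => m _; rewrite mxE mulrDl. Qed.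

Lemma TcZ c (A : MT) al j i : Tc (c *: A) al j i = c * Tc A al j i.
Proof.
rewrite !TcE big_distrr; apply: eq_bigr => m _; rewrite mxE /=; exact: esym (mulrA _ _ _).
Qed.

Lemma Tc0 al j i : Tc (0 : MT) al j i = 0.
Proof. by rewrite TcE big1 // => m _; rewrite mxE mul0r. Qed.

Lemma serD (A B : MT) al f k :
  ser_apply (A + B) al f k = ser_apply A al f k + ser_apply B al f k.
Proof.
rewrite !ser_applyE /serT -big_split; apply: eq_bigr => j _.
by rewrite -big_split; apply: eq_bigr => i _; rewrite TcD !mulrDl.
Qed.

Lemma serZ c (A : MT) al f k : ser_apply (c *: A) al f k = c * ser_apply A al f k.
Proof.
rewrite !ser_applyE /serT big_distrr; apply: eq_bigr => j _.
by rewrite big_distrr; apply: eq_bigr => i _; rewrite TcZ /= !mulrA.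
Qed.

Lemma ser0 al f k : ser_apply (0 : MT) al f k = 0.
Proof.
by rewrite ser_applyE /serT big1 // => j _; rewrite big1 // => i _; rewrite Tc0 !mul0r.
Qed.

Definition inV (A : MT) := forall i : 'I_rP, ~~ root (oplc A) (alpha i).

Lemma inV_lc A i : inV A -> lcv A (alpha i) != 0.
Proof. by move=> h; apply: h. Qed.

Variable M : 'I_rP -> 'M[K]_(r, d1.+1).
Hypothesis FM : forall i, Fspace (M i).

Definition gM i (a : 'I_r) (m : nat) : K :=
  if (m < d1.+1)%N then M i a (inord m) else 0.

Definition ggM i (j : 'I_r.+1) (m : nat) : K :=
  if insub (val j) is Some a then gM i a m else 0.

Lemma ggM_widen i (a : 'I_r) m : ggM i (widen_ord (leqnSn r) a) m = gM i a m.
Proof. by rewrite /ggM /= valK. Qed.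

Lemma gM_init i (a : 'I_r) m : (m < r)%N -> gM i a m = (a == m :> nat)%:R.
Proof.
move=> hm; have hm' : (m < d1.+1)%N by have := r_le_d1; lia.
by rewrite /gM hm' FM // inordK.
Qed.

Lemma ggME i : forall a : 'I_r.+1, (a < r)%N -> forall m, (m < r)%N ->
  ggM i a m = (a == m :> nat)%:R.
Proof.
move=> a ar m mr; rewrite /ggM insubT /=; exact: gM_init.
Qed.

Definition inW (A : MT) := forall i (a : 'I_r) k, (k < N)%N ->
  ser_apply A (alpha i) (gM i a) k = 0.

Lemma fiber_iff A : inV A ->
  ((forall i, fund_mat A (alpha i) d1 = M i) <-> inW A).
Proof.
move=> VA; split.
  move=> h i a k hk.
  have [_ Hrow] := fund_matP K0 d1 (inV_lc i VA).
  have [f [fs fM]] := Hrow a.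
  rewrite -(fs k); apply: ser_ext => m hm.
  have hm' : (m < d1.+1)%N by have := NrE; lia.
  by rewrite /gM hm' -h fM inordK.
move=> W i; apply/matrixP => a b.
rewrite fund_mat_sol //; last by have := r_le_d1; lia.
  2: exact: inV_lc.
have := @sol_uniq _ K0 _ _ A (alpha i) (sol A (alpha i) (fun m => (a == m :> nat)%:R))
   (gM i a) N (inV_lc i VA).
rewrite NrE => -> //.
- by rewrite /gM ltn_ord inord_val.
- by move=> k _; exact: (@sol_ok K K0 _ _ A (alpha i) _ (inV_lc i VA) k).
- by move=> k hk; apply: W.
- by move=> m hm; rewrite sol_init // gM_init.
Qed.


Definition sel (j : 'I_r.+1) (m : 'I_d.+1) : bool := (j == ord_max) || (N * rP <= m)%N.

Lemma coef_opcoef (A : MT) j (m : 'I_d.+1) : (opcoef A j)`_m = A j m.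
Proof. by rewrite /opcoef coef_poly ltn_ord inord_val. Qed.

Lemma poly_coefK (p : {poly K}) n : (size p <= n)%N -> \poly_(i < n) p`_i = p.
Proof.
move=> h; apply/polyP => i; rewrite coef_poly; case: ltnP => // hi.
by apply/esym; move/leq_sizeP: h; apply.
Qed.

Lemma serT_ext (tau tau' : 'I_r.+1 -> nat -> K) f k :
  (forall j i, (i <= k)%N -> tau j i = tau' j i) -> serT tau f k = serT tau' f k.
Proof.
by move=> h; apply: eq_bigr => j _; apply: eq_bigr => i _; rewrite h // -ltnS.
Qed.

Lemma W_exists (B : MT) : exists A : MT, inW A /\ forall j m, sel j m -> A j m = B j m.
Proof.
pose tau i := jsol (ggM i) (Tc B (alpha i)).
pose high (j : 'I_r.+1) : {poly K} :=
  \poly_(m < d.+1) (if (N * rP <= m)%N then B j (inord m) else 0).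
have hex j := herm_surj (fun i k => tau i j k - ((high j) \Po ('X + (alpha i)%:P))`_k) ainj N0.
have [hf Hh] := fin_all_exists hex.
pose c j := if j == ord_max then opcoef B ord_max else hf j + high j.
have sc j : (size (c j) <= d.+1)%N.
  rewrite /c; case: ifP => _; first exact: size_poly.
  apply: leq_trans (size_polyD _ _) _; rewrite geq_max size_poly andbT.
  apply: leq_trans (Hh j).1 _; lia.
pose A : MT := \matrix_(j, m) (c j)`_m.
have opA j : opcoef A j = c j.
  rewrite /opcoef (@eq_poly _ _ _ (fun m => (c j)`_m)); first exact: poly_coefK.
  by move=> m hm; rewrite mxE inordK.
exists A; split.
  move=> i a k hk; rewrite ser_applyE (@serT_ext _ (tau i)).
    have -> : gM i a = ggM i (widen_ord (leqnSn r) a).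
      by apply: functional_extensionality => m; rewrite ggM_widen.
    by apply: (jsol_ok K0 (ggME i)); rewrite /= ltn_ord.
  move=> j i' hi'; rewrite /Tc opA /c; case: eqP => [->|jn].
    by rewrite /tau jsol_max.
  rewrite comp_polyD coefD (Hh j).2; first by rewrite subrK.
  lia.
move=> j m; rewrite mxE /c /sel; case: eqP => [->|jn] /= hm.
  by rewrite coef_opcoef.
rewrite coefD coef_poly ltn_ord hm inord_val.
have -> : (hf j)`_m = 0.
  by move: (Hh j).1 => /leq_sizeP; apply.
by rewrite add0r.
Qed.

Lemma W_uniq (A A' : MT) : inW A -> inW A' ->
  (forall j m, sel j m -> A j m = A' j m) -> A = A'.
Proof.
move=> W W' hs.
have hmax m : A ord_max m = A' ord_max m by apply: hs; rewrite /sel eqxx.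
have opmax : opcoef A ord_max = opcoef A' ord_max.
  by apply: eq_poly => m hm; rewrite hmax.
have Wg (A0 : MT) i : inW A0 -> forall a : 'I_r.+1, (a < r)%N -> forall k, (k < N)%N ->
    serT (Tc A0 (alpha i)) (ggM i a) k = 0.
  move=> W0 a ar k hk.
  have -> : ggM i a = gM i (Ordinal ar).
    by apply: functional_extensionality => m; rewrite /ggM insubT.
  exact: W0.
have jets i j k : (k < N)%N -> Tc A (alpha i) j k = Tc A' (alpha i) j k.
  apply: (@jets_uniq K K0 r (ggM i) (ggME i) (Tc A (alpha i)) (Tc A' (alpha i)) N).
  - exact: Wg.
  - exact: Wg.
  - by move=> i' _; rewrite /Tc opmax.
have rows j : opcoef A j = opcoef A' j.
  case: (eqVneq j ord_max) => [->|jn]; first exact: opmax.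
  apply/eqP; rewrite -subr_eq0; apply/eqP.
  apply: (@herm_inj _ [seq alpha i | i <- enum 'I_rP] N).
  - by rewrite map_inj_uniq ?enum_uniq.
  - rewrite size_map size_enum_ord; apply/leq_sizeP => m hm.
    rewrite coefB /opcoef !coef_poly; case: ifP => hmd; last by rewrite subrr.
    rewrite hs ?subrr // /sel (negbTE jn) /= inordK //.
  - move=> a /mapP[i _ ->] k hk; rewrite comp_polyB coefB.
    by apply/eqP; rewrite subr_eq0; apply/eqP; apply: jets.
by apply/matrixP => j m; rewrite -!coef_opcoef rows.
Qed.

Lemma inW0 : inW 0.
Proof. by move=> i a k hk; rewrite ser0. Qed.

Lemma inWD (A B : MT) : inW A -> inW B -> inW (A + B).
Proof. by move=> hA hB i a k hk; rewrite serD hA // hB // addr0. Qed.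

Lemma inWZ c (A : MT) : inW A -> inW (c *: A).
Proof. by move=> hA i a k hk; rewrite serZ hA // mulr0. Qed.

Lemma inW_sum (I : finType) (c : I -> K) (F : I -> MT) :
  (forall t, inW (F t)) -> inW (\sum_t c t *: F t).
Proof.
move=> h; elim/big_rec: _ => [|t Acc _ HA]; first exact: inW0.
by apply: inWD => //; apply: inWZ.
Qed.

Lemma lcv_sum (A : MT) al :
  lcv A al = \sum_(m < d.+1) A ord_max m * al ^+ m.
Proof.
rewrite /lcv /oplc /opcoef poly_def horner_sum; apply: eq_bigr => m _.
by rewrite hornerZ hornerXn inord_val.
Qed.

Lemma surj_main : exists A : MT, inV A /\ inW A.
Proof.
pose B0 : MT := \matrix_(j, m) ((j == ord_max) && (m == 0 :> nat))%:R.
have [A [WA sA]] := W_exists B0.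
exists A; split => // i; rewrite /root -/(lcv A (alpha i)) lcv_sum.
rewrite (bigD1 ord0) //= big1 => [|m m0].
  by rewrite sA ?/sel ?eqxx // mxE eqxx /= expr0 mulr1 addr0 oner_neq0.
rewrite sA ?/sel ?eqxx // mxE eqxx /=; case: eqP => [e|]; last by rewrite mul0r.
by move: m0; rewrite -(inj_eq val_inj) /= e eqxx.
Qed.


Definition selp : pred ('I_r.+1 * 'I_d.+1) := [pred jm | sel jm.1 jm.2].
Definition Dm := #|selp|.
Lemma x0P : ((ord_max : 'I_r.+1), (ord0 : 'I_d.+1)) \in selp.
Proof. by rewrite inE /sel eqxx. Qed.

Lemma selmax (m : 'I_d.+1) : ((ord_max : 'I_r.+1), m) \in selp.
Proof. by rewrite inE /sel eqxx. Qed.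

Definition sidx (t : 'I_Dm) : 'I_(r.+1 * d.+1) :=
  mxvec_index (enum_val t).1 (enum_val t).2.

Lemma mxvec_index_inj (j j' : 'I_r.+1) (m m' : 'I_d.+1) :
  mxvec_index j m = mxvec_index j' m' -> (j, m) = (j', m').
Proof.
move=> e; pose E : 'M[K]_(r.+1, d.+1) := \matrix_(x, y) ((x == j) && (y == m))%:R.
have := congr1 (fun k => mxvec E 0 k) e; rewrite /= !mxvecE !mxE !eqxx /=.
case: (j' =P j) => [-> | _]; case: (m' =P m) => [-> | _] //=; by move=> /eqP; rewrite oner_eq0.
Qed.

Lemma sidx_inj : injective sidx.
Proof.
move=> t t' /mxvec_index_inj e; apply: enum_val_inj.
by rewrite [enum_val t]surjective_pairing [enum_val t']surjective_pairing.
Qed.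

Definition Fib := fun v : 'I_(r.+1 * d.+1) -> K =>
  exists A : MT, v = coords A /\ inV A /\ forall i, fund_mat A (alpha i) d1 = M i.

Lemma Fib_lower : coord_indep Fib sidx.
Proof.
move=> p hp.
pose fac (i : 'I_rP) : {mpoly K[Dm]} :=
  \sum_(m < d.+1) (alpha i ^+ m) *: 'X_(enum_rank_in x0P (ord_max, m)).
pose Qp := \prod_i fac i.
have facE i t : (fac i).@[t] =
    \sum_(m < d.+1) t (enum_rank_in x0P (ord_max, m)) * alpha i ^+ m.
  rewrite /fac (big_morph _ (mevalD t) (meval0 t)); apply: eq_bigr => m _.
  by rewrite mevalZ mevalXU mulrC.
have QpE t : Qp.@[t] = \prod_i (fac i).@[t].
  exact: (big_morph _ (mevalM t) (meval1 t)).
have van : forall t, (p * Qp).@[t] = 0.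
  move=> t; rewrite mevalM; case: (eqVneq (Qp.@[t]) 0) => [->|Qn]; first by rewrite mulr0.
  pose B : MT := \matrix_(j, m)
     (if (j, m) \in selp then t (enum_rank_in x0P (j, m)) else 0).
  have [A [WA sA]] := W_exists B.
  have VA : inV A.
    move=> i; rewrite /root -/(lcv A (alpha i)) lcv_sum.
    have : (fac i).@[t] != 0.
      by apply: contra Qn; rewrite QpE => h; apply/prodf_eq0; exists i.
    rewrite facE; congr (~~ (_ == _)); apply: eq_bigr => m _.
    by rewrite sA ?mxE ?inE /sel /= eqxx.
  have F : Fib (coords A).
    by exists A; split => //; split => //; apply/fiber_iff.
  have := hp _ F; rewrite (@meval_eq _ _ _ t) => [->|t']; first by rewrite mul0r.
  have hv : enum_val t' \in selp := enum_valP t'.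
  rewrite /sidx /coords mxvecE sA; last by move: hv; rewrite inE.
  by rewrite mxE -surjective_pairing hv enum_valK_in.
have pQ0 : p * Qp = 0 := mpoly_vanish K0 van.
have Qn0 : Qp != 0.
  pose t1 : 'I_Dm -> K := fun t => (enum_val t == (ord_max, ord0))%:R.
  apply/negP => /eqP Q0; have := congr1 (meval t1) Q0; rewrite meval0 QpE.
  have f1 i : (fac i).@[t1] = 1.
    rewrite facE (bigD1 ord0) //= big1 => [|m m0].
      by rewrite /t1 enum_rankK_in ?x0P // eqxx expr0 mulr1 addr0.
    rewrite /t1 (enum_rankK_in _ (selmax m)).
    by rewrite xpair_eqE eqxx /= (negbTE m0) mul0r.
  by rewrite (eq_bigr _ (fun i _ => f1 i)) big1_eq => /eqP; rewrite oner_eq0.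
by move: pQ0 => /eqP; rewrite mulf_eq0 (negbTE Qn0) orbF => /eqP.
Qed.

Lemma coords_sum (I : finType) (c : I -> K) (F : I -> MT) k :
  coords (\sum_t c t *: F t) k = \sum_t c t * coords (F t) k.
Proof.
case: (mxvec_indexP k) => j m; rewrite /coords !mxvecE summxE.
by apply: eq_bigr => t _; rewrite mxE mxvecE.
Qed.

Lemma Fib_upper e (s' : 'I_e -> 'I_(r.+1 * d.+1)) :
  coord_indep Fib s' -> (e <= Dm)%N.
Proof.
move=> ci; rewrite leqNgt; apply/negP => hlt.
have hb t0 := W_exists (\matrix_(j, m)
   (if (j, m) \in selp then (enum_rank_in x0P (j, m) == t0)%:R else 0)).
have [Af HA] := fin_all_exists hb.
pose Lam : 'M[K]_(Dm, e) := \matrix_(t0, u) coords (Af t0) (s' u).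
have kn0 : kermx Lam^T != 0.
  apply/negP => /eqP k0; have := mxrank_ker Lam^T; rewrite k0 mxrank0.
  have := rank_leq_col Lam^T; lia.
have [u0 hu0] : exists u0, row u0 (kermx Lam^T) != 0.
  case: (pickP (fun u => row u (kermx Lam^T) != 0)) => [u hu|h]; first by exists u.
  move/eqP: kn0 => kn0; exfalso; apply: kn0; apply/row_matrixP => u.
  by rewrite row0; have := h u; move/negbFE/eqP.
pose mu := row u0 (kermx Lam^T).
have muK : mu *m Lam^T = 0 by rewrite -row_mul mulmx_ker row0.
pose pp : {mpoly K[e]} := \sum_u mu 0 u *: 'X_u.
have pp0 : pp = 0.
  apply: ci => v [A [-> [VA hA]]].
  have WA : inW A by apply/fiber_iff.
  pose A' := \sum_t0 (A (enum_val t0).1 (enum_val t0).2) *: Af t0.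
  have AA' : A' = A.
    apply: W_uniq => //.
      by apply: inW_sum => t0; exact: (HA t0).1.
    move=> j m hs; rewrite summxE (bigD1 (enum_rank_in x0P (j, m))) //=.
    rewrite big1 => [|t0 ht0].
      rewrite mxE (HA _).2 // mxE inE hs eqxx mulr1 addr0.
      by rewrite enum_rankK_in // inE.
    rewrite mxE (HA _).2 // mxE inE hs; case: eqP => [e0|]; last by rewrite mulr0.
    by move: ht0; rewrite e0 eqxx.
  rewrite /pp (big_morph _ (mevalD _) (meval0 _)).
  rewrite (eq_bigr (fun u => mu 0 u * coords A (s' u))); last first.
    by move=> u _; rewrite mevalZ mevalXU.
  rewrite -AA'.
  under eq_bigr => u _ do rewrite coords_sum big_distrr.
  rewrite exchange_big /= big1 // => t0 _.
  have := congr1 (fun X : 'rV_Dm => X 0 t0) muK; rewrite /= mxE mxE => h0.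
  set x := A (enum_val t0).1 (enum_val t0).2.
  rewrite (eq_bigr (fun u => x * (mu 0 u * Lam^T u t0))); last first.
    by move=> u _; rewrite !mxE; ring.
  by rewrite -big_distrr /= h0 mulr0.
have [u1 hu1] : exists u1, mu 0 u1 != 0.
  case: (pickP (fun u => mu 0 u != 0)) => [u hu|h]; first by exists u.
  exfalso; move: hu0; rewrite -/mu; case/negP; apply/eqP/rowP => u.
  by have := h u; move/negbFE/eqP => ->; rewrite mxE.
have := congr1 (mcoeff U_(u1)) pp0.
rewrite mcoeff0 /pp (big_morph _ (mcoeffD _) (mcoeff0 _ _)) (bigD1 u1) //= big1.
  by rewrite mcoeffZ mcoeffXU eqxx mulr1 addr0 => /eqP; rewrite (negbTE hu1).
by move=> u hu; rewrite mcoeffZ mcoeffXU (negbTE hu) mulr0.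
Qed.

End Main.

Unset Implicit Arguments. Set Strict Implicit.

Theorem proposition19 (C : fieldType) (K : closedFieldType)
  (iota : {rmorphism C -> K}) (P : {poly {poly C}}) (rP rL dL : nat)
  (alpha : 'I_rP -> K) :
  [pchar C] =i pred0 ->
  (forall z : K, exists2 p : {poly C}, p != 0 & root (map_poly iota p) z) ->
  (1 < rP)%N ->
  size P = rP.+1 ->
  size (P_at0 P) = rP.+1 ->
  squarefree (P_at0 P) ->
  injective alpha ->
  (forall z : K, root (map_poly iota (P_at0 P)) z <-> exists i, alpha i = z) ->
  ((rL * rP - rL + 1) * rP <= dL)%N ->
  let inV := fun A : 'M[K]_(rL.+1, dL.+1) =>
               forall i : 'I_rP, ~~ root (oplc A) (alpha i) in
  let phi := fun (A : 'M[K]_(rL.+1, dL.+1)) (i : 'I_rP) =>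
               fund_mat A (alpha i) (rL * rP) in
  (* phi maps V into F(rL, rL rP)^rP *)
  (forall A, inV A -> forall i, Fspace (phi A i))
  (* phi is a regular map of algebraic sets *)
  /\ (forall (i : 'I_rP) (a : 'I_rL) (b : 'I_(rL * rP).+1),
        exists p q : {mpoly K[rL.+1 * dL.+1]},
          forall A, inV A ->
            q.@[coords A] != 0 /\ phi A i a b = p.@[coords A] / q.@[coords A])
  (* phi is surjective *)
  /\ (forall M : 'I_rP -> 'M[K]_(rL, (rL * rP).+1),
        (forall i, Fspace (M i)) ->
        exists A, inV A /\ forall i, phi A i = M i)
  (* all fibers have the same dimension *)
  /\ (exists dim : nat,
        forall M : 'I_rP -> 'M[K]_(rL, (rL * rP).+1),
          (forall i, Fspace (M i)) ->
          has_dim (fun v => exists A, v = coords A /\ inV A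
                                      /\ forall i, phi A i = M i) dim).
Proof.
move=> charC _ hrP _ _ _ ainj _ hdL inV phi.
have K0 : forall n : nat, (n%:R == 0 :> K) = (n == 0%N).
  move=> n; rewrite -(rmorph_nat iota) fmorph_eq0.
  by have /pcharf0P := charC; apply.
have lcV A i : inV A -> lcv A (alpha i) != 0 by move=> h; apply: h.
split.
  move=> A VA i; have [H _] := fund_matP K0 (rL * rP) (lcV A i VA); exact: H.
split.
  move=> i a b.
  have Qlc : forall A, inV A -> lcv A (alpha i) != 0 by move=> A; apply: lcV.
  have [p [q H]] := pish_Fsol Qlc K0 (fun m => (a == m :> nat)%:R) b.+1 b.
  exists p, q => A VA; have [qn e] := H A VA; split => //.
  rewrite /phi fund_mat_sol //; first exact: lcV.
  have : (rL <= rL * rP)%N by rewrite leq_pmulr //; apply: ltnW.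
  by move=> h; apply: leq_trans h _.
split.
  move=> M FM; have [A [VA WA]] := surj_main K0 ainj hrP hdL FM.
  by exists A; split => //; apply/(fiber_iff K0 hrP hdL FM VA).
exists (Dm rL rP dL) => M FM; split.
  have HL := Fib_lower K0 ainj hrP hdL FM.
  eexists; split; last exact: HL.
  exact: sidx_inj.
move=> e s _ ci; exact: (Fib_upper K0 ainj hrP hdL FM ci).
Qed.
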